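(* Fix $M>0$. For every $\delta>0$ there exist $\varepsilon_0>0$ and $l_0$ large such that the following holds for $0<\varepsilon\le\varepsilon_0$. Suppose a spherically symmetric solution of the Einstein–scalar field system exists in the open trapezoid region $T_0\subset\mathcal T$ and its initial data on the spacelike curve $\{r=2^{-l_0}\}$ satisfy $$\Big|\partial_vr+\frac Mr\Big|\le\varepsilon\frac Mr,\quad\Big|\partial_ur+\frac Mr\Big|\le\varepsilon\frac Mr,\quad\Big|\Omega^2-\frac{2M}r\Big|\le\varepsilon\frac Mr,\quad|\partial_u\phi|\le\frac{\varepsilon}{r^2},\quad|\partial_v\phi|\le\frac{\varepsilon}{r^2}.$$ Then throughout $T_0$: $$|r\partial_vr+M|\le\delta M,\qquad|r\partial_ur+M|\le\delta M,\qquad\Omega^2\le\frac{2.5M}{r},\qquad r^2|\partial_u\phi|+r^2|\partial_v\phi|\le C\varepsilon,$$ where $C$ depends only on $M$.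
   Context: The Einstein–scalar field system under spherical symmetry in double null coordinates, $g=-\Omega^2(u,v)\,du\,dv+r^2(u,v)(d\theta^2+\sin^2\theta\,d\varphi^2)$, with scalar field $\phi$, reads $r\partial_u\partial_v r=-\partial_ur\,\partial_vr-\frac14\Omega^2$, $r^2\partial_u\partial_v\log\Omega=\partial_ur\,\partial_vr+\frac14\Omega^2-r^2\partial_u\phi\,\partial_v\phi$, $r\partial_u\partial_v\phi=-\partial_ur\,\partial_v\phi-\partial_vr\,\partial_u\phi$, $\partial_u(\Omega^{-2}\partial_ur)=-r\Omega^{-2}(\partial_u\phi)^2$, $\partial_v(\Omega^{-2}\partial_vr)=-r\Omega^{-2}(\partial_v\phi)^2$. The trapped region is $\mathcal T=\{\partial_ur<0,\partial_vr<0,r>0\}$. The trapezoid region $T_0$ is the open region in $\mathcal T$ bounded to the past by the spacelike curve $\{r=2^{-l_0}\}$, to the future by the singular curve $\{r=0\}$, and on the sides by null segments $\{u=U\}$ and $\{v=V\}$ (so $T_0$ is the domain of dependence of its initial curve). These data are a perturbation of the Schwarzschild interior of mass parameter $M$ near $r=0$. *)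

(* Defs.v *)
From Stdlib Require Import Reals Lra.
Open Scope R_scope.

Definition pd_u (D : R -> R -> Prop) (f g : R -> R -> R) : Prop :=
  forall u v, D u v -> derivable_pt_lim (fun x => f x v) u (g u v).

Definition pd_v (D : R -> R -> Prop) (f g : R -> R -> R) : Prop :=
  forall u v, D u v -> derivable_pt_lim (fun y => f u y) v (g u v).

Definition cont2 (D : R -> R -> Prop) (f : R -> R -> R) : Prop :=
  forall u v, D u v -> forall e, 0 < e -> exists d, 0 < d /\
    forall u' v', D u' v' -> Rabs (u' - u) < d -> Rabs (v' - v) < d ->
      Rabs (f u' v' - f u v) < e.

Definition open2 (D : R -> R -> Prop) : Prop :=
  forall u v, D u v -> exists d, 0 < d /\
    forall u' v', Rabs (u' - u) < d -> Rabs (v' - v) < d -> D u' v'.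

(* Mixed derivatives d_u d_v f are taken as d_v (d_u f). *)
Definition ESF_solution (D : R -> R -> Prop)
  (r Om phi ru rv phiu phiv : R -> R -> R) : Prop :=
  (forall u v, D u v -> 0 < Om u v) /\
  pd_u D r ru /\ pd_v D r rv /\ pd_u D phi phiu /\ pd_v D phi phiv /\
  exists ruv Lu Luv phiuv : R -> R -> R,
    pd_v D ru ruv /\
    pd_u D (fun u v => ln (Om u v)) Lu /\ pd_v D Lu Luv /\
    pd_v D phiu phiuv /\
    pd_u D (fun u v => ru u v / (Om u v) ^ 2)
           (fun u v => - r u v / (Om u v) ^ 2 * (phiu u v) ^ 2) /\
    pd_v D (fun u v => rv u v / (Om u v) ^ 2)
           (fun u v => - r u v / (Om u v) ^ 2 * (phiv u v) ^ 2) /\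
    (forall u v, D u v ->
       r u v * ruv u v = - ru u v * rv u v - / 4 * (Om u v) ^ 2 /\
       (r u v) ^ 2 * Luv u v
         = ru u v * rv u v + / 4 * (Om u v) ^ 2
           - (r u v) ^ 2 * phiu u v * phiv u v /\
       r u v * phiuv u v = - ru u v * phiv u v - rv u v * phiu u v) /\
    cont2 D r /\ cont2 D Om /\ cont2 D phi /\
    cont2 D ru /\ cont2 D rv /\ cont2 D phiu /\ cont2 D phiv /\
    cont2 D ruv /\ cont2 D Luv /\ cont2 D phiuv.

(* The open trapezoid T0 in the (u,v)-plane, for an initial spacelike curve
   given as the graph v = gam u, u in (u1, U), with gam u1 = V: the points
   to the future of the curve, to the past of {u = U} and {v = V}, where the
   solution (domain D) exists. *)
Definition trapezoid (D : R -> R -> Prop) (u1 U V : R) (gam : R -> R)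
  (u v : R) : Prop :=
  u1 < u < U /\ gam u < v < V /\ D u v.

(* Main.v *)
Require Import Defs.
From Stdlib Require Import Reals.
From Stdlib Require Import Lra Lia Psatz Classical Ranalysis5.
Open Scope R_scope.


Lemma cont_pt_eps f x : continuity_pt f x ->
  forall e, 0 < e -> exists d, 0 < d /\ forall y, Rabs (y - x) < d -> Rabs (f y - f x) < e.
Proof.
  intros H e He. destruct (H e He) as [a [Ha H1]]. exists a; split; auto.
  intros y Hy. destruct (Req_dec y x) as [ ->|Hne].
  - rewrite Rminus_diag, Rabs_R0; auto.
  - apply (H1 y). split. split; auto. exact I. simpl. unfold R_dist. exact Hy.
Qed.

Lemma MVT_sym f f' a b :
  (forall c, Rabs (c - a) <= Rabs (b - a) -> derivable_pt_lim f c (f' c)) ->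
  exists c, Rabs (c - a) <= Rabs (b - a) /\ f b - f a = f' c * (b - a).
Proof.
  intros H. destruct (Rtotal_order a b) as [Hab|[Hab|Hab]].
  - destruct (MVT_cor2 f f' a b Hab) as [c [E Hc]].
    + intros c Hc. apply H. rewrite !Rabs_right; lra.
    + exists c. split; auto. rewrite !Rabs_right; lra.
  - subst. exists b. split. right; reflexivity. ring.
  - destruct (MVT_cor2 f f' b a Hab) as [c [E Hc]].
    + intros c Hc. apply H. rewrite !Rabs_left1; lra.
    + exists c. split. rewrite !Rabs_left1; lra. lra.
Qed.

Lemma mono_nonincr f f' a b : a <= b ->
  (forall c, a <= c <= b -> derivable_pt_lim f c (f' c)) ->
  (forall c, a < c < b -> f' c <= 0) -> f b <= f a.
Proof.
  intros Hab Hd Hs. destruct Hab as [Hab| ->]; [|lra].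
  destruct (MVT_cor2 f f' a b Hab Hd) as [c [E Hc]].
  specialize (Hs c Hc). nra.
Qed.

Lemma deriv_back_pos f x l : derivable_pt_lim f x l -> 0 < l ->
  exists d, 0 < d /\ forall h, 0 < h < d -> f (x - h) < f x.
Proof.
  intros H Hl. destruct (H (l/2)) as [[d Hd] H1]; [lra|].
  exists d. split; auto. intros h Hh.
  specialize (H1 (-h)). simpl in H1.
  assert (Hn : -h <> 0) by lra.
  assert (Ha : Rabs (-h) < d) by (rewrite Rabs_left; lra).
  specialize (H1 Hn Ha). replace (x + - h) with (x - h) in H1 by ring.
  apply Rabs_def2 in H1. destruct H1 as [H1 H2].
  assert (E: (f (x - h) - f x) / - h > l/2) by lra.
  assert (E2 : f (x-h) - f x = ((f (x - h) - f x) / - h) * (-h)) by (field; lra).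
  nra.
Qed.

Lemma deriv_back_neg f x l : derivable_pt_lim f x l -> l < 0 ->
  exists d, 0 < d /\ forall h, 0 < h < d -> f x < f (x - h).
Proof.
  intros H Hl. destruct (H (-l/2)) as [[d Hd] H1]; [lra|].
  exists d. split; auto. intros h Hh.
  specialize (H1 (-h)). simpl in H1.
  assert (Hn : -h <> 0) by lra.
  assert (Ha : Rabs (-h) < d) by (rewrite Rabs_left; lra).
  specialize (H1 Hn Ha). replace (x + - h) with (x - h) in H1 by ring.
  apply Rabs_def2 in H1. destruct H1 as [H1 H2].
  assert (E2 : f (x-h) - f x = ((f (x - h) - f x) / - h) * (-h)) by (field; lra).
  nra.
Qed.

Definition cat (D : R -> R -> Prop) (f : R -> R -> R) u v : Prop :=
  forall e, 0 < e -> exists d, 0 < d /\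
    forall u' v', D u' v' -> Rabs (u' - u) < d -> Rabs (v' - v) < d ->
      Rabs (f u' v' - f u v) < e.

Lemma cat_of D f u v : cont2 D f -> D u v -> cat D f u v.
Proof. intros H Hd. exact (H u v Hd). Qed.

Lemma cat_plus D f g u v : cat D f u v -> cat D g u v -> cat D (fun a b => f a b + g a b) u v.
Proof.
  intros Hf Hg e He. destruct (Hf (e/2)) as [d1 [Hd1 H1]]; [lra|].
  destruct (Hg (e/2)) as [d2 [Hd2 H2]]; [lra|].
  exists (Rmin d1 d2). split. apply Rmin_pos; auto.
  intros u' v' HD Hu Hv.
  assert (A1 := H1 u' v' HD (Rlt_le_trans _ _ _ Hu (Rmin_l _ _)) (Rlt_le_trans _ _ _ Hv (Rmin_l _ _))).
  assert (A2 := H2 u' v' HD (Rlt_le_trans _ _ _ Hu (Rmin_r _ _)) (Rlt_le_trans _ _ _ Hv (Rmin_r _ _))).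
  apply Rabs_def2 in A1; apply Rabs_def2 in A2. apply Rabs_def1; lra.
Qed.

Lemma cat_abs D f u v : cat D f u v -> cat D (fun a b => Rabs (f a b)) u v.
Proof.
  intros Hf e He. destruct (Hf e He) as [d [Hd H1]]. exists d; split; auto.
  intros u' v' HD Hu Hv. eapply Rle_lt_trans. apply Rabs_triang_inv2. auto.
Qed.

Lemma cat_mult D f g u v : cat D f u v -> cat D g u v -> cat D (fun a b => f a b * g a b) u v.
Proof.
  intros Hf Hg e He.
  set (F := Rabs (f u v)). set (G := Rabs (g u v)).
  assert (HF : 0 <= F) by apply Rabs_pos. assert (HG : 0 <= G) by apply Rabs_pos.
  set (a := Rmin 1 (e / (3 * (G + 1)))). set (b := e / (3 * (F + 1))).
  assert (Ha : 0 < a). { apply Rmin_pos. lra. apply Rdiv_lt_0_compat; lra. }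
  assert (Hb : 0 < b) by (apply Rdiv_lt_0_compat; lra).
  destruct (Hf a Ha) as [d1 [Hd1 H1]]. destruct (Hg b Hb) as [d2 [Hd2 H2]].
  exists (Rmin d1 d2). split. apply Rmin_pos; auto.
  intros u' v' HD Hu Hv.
  assert (A1 := H1 u' v' HD (Rlt_le_trans _ _ _ Hu (Rmin_l _ _)) (Rlt_le_trans _ _ _ Hv (Rmin_l _ _))).
  assert (A2 := H2 u' v' HD (Rlt_le_trans _ _ _ Hu (Rmin_r _ _)) (Rlt_le_trans _ _ _ Hv (Rmin_r _ _))).
  set (x := f u' v' - f u v) in *. set (y := g u' v' - g u v) in *.
  replace (f u' v' * g u' v' - f u v * g u v) with (x * y + x * g u v + f u v * y) by (unfold x, y; ring).
  assert (Hx := Rabs_pos x). assert (Hy := Rabs_pos y).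
  assert (a1 : a <= 1) by apply Rmin_l.
  assert (a2 : a <= e / (3 * (G+1))) by apply Rmin_r.
  assert (e1 : a * (G + 1) <= e / 3).
  { apply Rmult_le_reg_r with (/ (G+1)). apply Rinv_0_lt_compat; lra.
    replace (a * (G + 1) * / (G + 1)) with a by (field; lra).
    replace (e / 3 * / (G+1)) with (e / (3 * (G+1))) by (field; lra). auto. }
  assert (e2 : b * (F + 1) = e / 3) by (unfold b; field; lra).
  eapply Rle_lt_trans. apply Rabs_triang.
  eapply Rle_lt_trans. apply Rplus_le_compat_r. apply Rabs_triang.
  rewrite !Rabs_mult. fold F G.
  assert (Rabs x * Rabs y <= a * b) by (apply Rmult_le_compat; lra).
  assert (Rabs x * G <= a * G) by nra.
  assert (F * Rabs y <= F * b) by nra.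
  nra.
Qed.

Lemma cat_const D c u v : cat D (fun _ _ => c) u v.
Proof. intros e He. exists 1. split. lra. intros. rewrite Rminus_diag, Rabs_R0. auto. Qed.

Lemma cat_neg D f u v : cat D f u v -> f u v < 0 -> exists d, 0 < d /\
    forall u' v', D u' v' -> Rabs (u' - u) < d -> Rabs (v' - v) < d -> f u' v' < 0.
Proof.
  intros Hf H. destruct (Hf (- f u v)) as [d [Hd H1]]; [lra|]. exists d. split; auto.
  intros. specialize (H1 u' v' H0 H2 H3). apply Rabs_def2 in H1. lra.
Qed.

Lemma cat_pos D f u v : cat D f u v -> 0 < f u v -> exists d, 0 < d /\
    forall u' v', D u' v' -> Rabs (u' - u) < d -> Rabs (v' - v) < d -> 0 < f u' v'.
Proof.
  intros Hf H. destruct (Hf (f u v)) as [d [Hd H1]]; [lra|]. exists d. split; auto.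
  intros. specialize (H1 u' v' H0 H2 H3). apply Rabs_def2 in H1. lra.
Qed.


Lemma schwarz D f fu fv fuv : open2 D -> pd_u D f fu -> pd_v D f fv ->
  pd_v D fu fuv -> cont2 D fuv -> pd_u D fv fuv.
Proof.
  intros Hop Hu Hv Huv Hc u v HD e He.
  destruct (Hop u v HD) as [d0 [Hd0 Hsq]].
  destruct (Hc u v HD (e/2)) as [d1 [Hd1 Hc1]]; [lra|].
  assert (Hdm : 0 < Rmin d0 d1) by (apply Rmin_pos; lra).
  assert (Hdel : 0 < Rmin d0 d1 / 2) by lra.
  exists (mkposreal _ Hdel). simpl. intros h Hh0 Hh.
  assert (Hm0 := Rmin_l d0 d1). assert (Hm1 := Rmin_r d0 d1).
  assert (Hhp : 0 < Rabs h) by (apply Rabs_pos_lt; auto).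
  assert (HDh : D (u + h) v).
  { apply Hsq. replace (u + h - u) with h by ring. lra. rewrite Rminus_diag, Rabs_R0. lra. }
  assert (He' : 0 < e * Rabs h / 4) by (apply Rdiv_lt_0_compat; nra).
  destruct (Hv (u + h) v HDh _ He') as [[k1 Hk1] H1].
  destruct (Hv u v HD _ He') as [[k2 Hk2] H2]. simpl in H1, H2.
  set (k := Rmin (Rmin k1 k2) (Rmin d0 d1 / 2) / 2).
  assert (Hk0 : 0 < Rmin (Rmin k1 k2) (Rmin d0 d1 / 2)) by (repeat apply Rmin_pos; lra).
  assert (Hk : 0 < k) by (unfold k; lra).
  assert (Hkm1 : Rmin k1 k2 <= k1) by apply Rmin_l.
  assert (Hkm2 : Rmin k1 k2 <= k2) by apply Rmin_r.
  assert (Hkm3 : Rmin (Rmin k1 k2) (Rmin d0 d1 / 2) <= Rmin k1 k2) by apply Rmin_l.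
  assert (Hkm4 : Rmin (Rmin k1 k2) (Rmin d0 d1 / 2) <= Rmin d0 d1 / 2) by apply Rmin_r.
  assert (Hkabs : Rabs k = k) by (apply Rabs_right; lra).
  assert (Kb1 : k < k1) by (unfold k; lra).
  assert (Kb2 : k < k2) by (unfold k; lra).
  assert (Kb3 : k < Rmin d0 d1 / 2) by (unfold k; lra).
  clearbody k.
  assert (A1 : Rabs ((f (u + h) (v + k) - f (u + h) v) / k - fv (u + h) v) < e * Rabs h / 4).
  { apply H1. lra. lra. }
  assert (A2 : Rabs ((f u (v + k) - f u v) / k - fv u v) < e * Rabs h / 4).
  { apply H2. lra. lra. }
  destruct (MVT_sym (fun s => f s (v + k) - f s v) (fun s => fu s (v + k) - fu s v) u (u + h))
    as [xi [Hxi Exi]].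
  { intros c Hcc. replace (u + h - u) with h in Hcc by ring.
    apply derivable_pt_lim_minus.
    - apply Hu. apply Hsq. lra. replace (v + k - v) with k by ring. rewrite Hkabs; lra.
    - apply Hu. apply Hsq. lra. rewrite Rminus_diag, Rabs_R0. lra. }
  replace (u + h - u) with h in Hxi by ring.
  destruct (MVT_sym (fun t => fu xi t) (fun t => fuv xi t) v (v + k)) as [eta [Heta Eeta]].
  { intros c Hcc. replace (v + k - v) with k in Hcc by ring.
    apply Huv. apply Hsq. lra. lra. }
  replace (v + k - v) with k in Heta by ring.
  assert (Hc2 : Rabs (fuv xi eta - fuv u v) < e / 2).
  { apply Hc1. apply Hsq; lra. lra. lra. }
  set (F := fuv xi eta) in *.
  set (Q := (fv (u + h) v - fv u v) / h).
  assert (EQ : fv (u + h) v - fv u v = Q * h) by (unfold Q; field; auto).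
  assert (Ediff : (f (u + h) (v + k) - f (u + h) v) / k - (f u (v + k) - f u v) / k = h * F).
  { replace ((f (u + h) (v + k) - f (u + h) v) / k - (f u (v + k) - f u v) / k)
      with ((f (u + h) (v + k) - f (u + h) v - (f u (v + k) - f u v)) / k) by (field; lra).
    replace (f (u + h) (v + k) - f (u + h) v - (f u (v + k) - f u v))
      with ((fu xi (v + k) - fu xi v) * (u + h - u)) by (simpl in Exi; lra).
    rewrite Eeta. field. lra. }
  assert (B : Rabs (h * F - Q * h) < e * Rabs h / 2).
  { rewrite <- Ediff, <- EQ.
    replace ((f (u + h) (v + k) - f (u + h) v) / k - (f u (v + k) - f u v) / k - (fv (u + h) v - fv u v))
      with (((f (u + h) (v + k) - f (u + h) v) / k - fv (u + h) v) - ((f u (v + k) - f u v) / k - fv u v)) by ring.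
    eapply Rle_lt_trans. apply Rabs_triang_inv2 || apply Rabs_triang. 
    rewrite Rabs_Ropp. lra. }
  replace (h * F - Q * h) with (h * (F - Q)) in B by ring.
  rewrite Rabs_mult in B.
  assert (B2 : Rabs (F - Q) < e / 2).
  { apply Rmult_lt_reg_l with (Rabs h); auto. lra. }
  replace (Q - fuv u v) with ((F - fuv u v) - (F - Q)) by ring.
  eapply Rle_lt_trans. apply Rabs_triang. rewrite Rabs_Ropp. lra.
Qed.


Lemma lub_exists_above (E : R -> Prop) m x : is_lub E m -> x < m -> exists w, E w /\ x < w.
Proof.
  intros [Hub Hl] Hx. apply NNPP; intro Hn.
  assert (m <= x). { apply Hl. intros w Hw. destruct (Rle_lt_dec w x); auto.
    exfalso; apply Hn; exists w; auto. }
  lra.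
Qed.



Lemma T_open_down D u1 U V gam a b : trapezoid D u1 U V gam a b ->
  (forall u v, trapezoid D u1 U V gam u v -> forall u' v', u1 < u' <= u -> gam u' < v' <= v -> D u' v') ->
  exists d, 0 < d /\ forall h, 0 <= h < d -> trapezoid D u1 U V gam a (b - h).
Proof.
  intros HT Hpc. destruct HT as [H1 [H2 H3]] eqn:E.
  exists (b - gam a). split. lra. intros h Hh. split. lra. split. lra.
  apply (Hpc a b HT). lra. lra.
Qed.

Lemma T_open_left D u1 U V gam a b : trapezoid D u1 U V gam a b ->
  (forall a, u1 <= a <= U -> continuity_pt gam a) ->
  (forall u v, trapezoid D u1 U V gam u v -> forall u' v', u1 < u' <= u -> gam u' < v' <= v -> D u' v') ->
  exists d, 0 < d /\ forall h, 0 <= h < d -> trapezoid D u1 U V gam (a - h) b.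
Proof.
  intros HT Hc Hpc. destruct HT as [H1 [H2 H3]] eqn:E.
  destruct (cont_pt_eps gam a (Hc a ltac:(lra)) (b - gam a)) as [d1 [Hd1 Hg]]; [lra|].
  exists (Rmin d1 (a - u1)). split. apply Rmin_pos; lra.
  intros h Hh. assert (Rmin d1 (a - u1) <= d1) by apply Rmin_l.
  assert (Rmin d1 (a - u1) <= a - u1) by apply Rmin_r.
  assert (G : Rabs (gam (a - h) - gam a) < b - gam a).
  { apply Hg. replace (a - h - a) with (- h) by ring. rewrite Rabs_Ropp, Rabs_right; lra. }
  apply Rabs_def2 in G.
  split. lra. split. lra. apply (Hpc a b HT). lra. lra.
Qed.

Lemma MP (D : R -> R -> Prop) (u1 U V : R) (gam : R -> R) (GX GY : R -> R -> R) :
  (forall a b, u1 <= a -> a < b -> b <= U -> gam b < gam a) ->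
  (forall a, u1 <= a <= U -> continuity_pt gam a) ->
  gam u1 = V ->
  (forall u v, trapezoid D u1 U V gam u v -> forall u' v', u1 < u' <= u -> gam u' < v' <= v -> D u' v') ->
  (forall a, u1 < a < U -> D a (gam a) /\ GX a (gam a) < 0 /\ GY a (gam a) < 0 /\
        cat D GX a (gam a) /\ cat D GY a (gam a)) ->
  (forall a b, trapezoid D u1 U V gam a b -> cat D GX a b /\ cat D GY a b) ->
  (forall a b, trapezoid D u1 U V gam a b -> GX a b = 0 -> GY a b <= 0 ->
       exists d, 0 < d /\ forall h, 0 < h < d -> trapezoid D u1 U V gam a (b - h) -> 0 < GX a (b - h)) ->
  (forall a b, trapezoid D u1 U V gam a b -> GY a b = 0 -> GX a b <= 0 ->
       exists d, 0 < d /\ forall h, 0 < h < d -> trapezoid D u1 U V gam (a - h) b -> 0 < GY (a - h) b) ->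
  forall us vs, trapezoid D u1 U V gam us vs -> GX us vs <= 0 /\ GY us vs <= 0.
Proof.
  intros Hdec Hgc Hg1 Hpc Hcurve Hcont HlocX HlocY us vs Hs.
  set (T := trapezoid D u1 U V gam) in *.
  apply NNPP; intro Hnot.
  destruct Hs as [Hs1 [Hs2 Hs3]] eqn:EHs.
  set (Good := fun w => forall a b, T a b -> a <= us -> b <= w -> GX a b <= 0 /\ GY a b <= 0).
  assert (Gdown : forall w w', Good w -> w' <= w -> Good w').
  { intros w w' Hw Hw' a b Ha Hau Hb. apply Hw; auto; lra. }
  assert (NGvs : ~ Good vs) by (intro H; apply Hnot; apply H; auto; lra).
  assert (Gle : forall w, Good w -> w <= vs).
  { intros w Hw. destruct (Rle_lt_dec w vs); auto. exfalso; apply NGvs; apply (Gdown w); auto; lra. }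
  assert (G0 : Good (gam us)).
  { intros a b [Ha1 [Ha2 Ha3]] Hau Hb. exfalso.
    destruct Hau as [Hau| ->]. assert (gam us < gam a) by (apply Hdec; lra). lra. lra. }
  destruct (completeness Good) as [wb Hwb].
  { exists vs. intros w Hw. apply Gle; auto. }
  { exists (gam us). auto. }
  assert (Hwb1 : gam us <= wb) by (apply (proj1 Hwb); auto).
  assert (Hwb2 : wb <= vs) by (apply (proj2 Hwb); intros w Hw; apply Gle; auto).
  assert (Glt : forall a b, T a b -> a <= us -> b < wb -> GX a b <= 0 /\ GY a b <= 0).
  { intros a b HT Hau Hb. destruct (lub_exists_above Good wb b Hwb Hb) as [w [Hw Hbw]].
    apply Hw; auto; lra. }
  assert (Gwb : Good wb).
  { intros a b HT Hau Hb. destruct Hb as [Hb| ->]. apply Glt; auto.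
    apply NNPP; intro Hn. apply not_and_or in Hn.
    destruct (T_open_down D u1 U V gam a wb HT Hpc) as [d2 [Hd2 Ho]].
    destruct (Hcont a wb HT) as [CX CY].
    assert (HTD : forall h, 0 <= h < d2 -> D a (wb - h)) by (intros h Hh; apply (Ho h Hh)).
    destruct Hn as [Hn|Hn]; apply Rnot_le_lt in Hn.
    - destruct (cat_pos D GX a wb CX Hn) as [d1 [Hd1 Hp]].
      set (h := Rmin d1 d2 / 2).
      assert (Rmin d1 d2 <= d1) by apply Rmin_l. assert (Rmin d1 d2 <= d2) by apply Rmin_r.
      assert (0 < Rmin d1 d2) by (apply Rmin_pos; lra).
      assert (Hx := Hp a (wb - h) (HTD h ltac:(unfold h; lra))).
      rewrite Rminus_diag, Rabs_R0 in Hx. replace (wb - h - wb) with (- h) in Hx by ring.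
      rewrite Rabs_Ropp, Rabs_right in Hx by (unfold h; lra).
      specialize (Hx ltac:(lra) ltac:(unfold h; lra)).
      destruct (Glt a (wb - h) (Ho h ltac:(unfold h; lra)) Hau ltac:(unfold h; lra)). lra.
    - destruct (cat_pos D GY a wb CY Hn) as [d1 [Hd1 Hp]].
      set (h := Rmin d1 d2 / 2).
      assert (Rmin d1 d2 <= d1) by apply Rmin_l. assert (Rmin d1 d2 <= d2) by apply Rmin_r.
      assert (0 < Rmin d1 d2) by (apply Rmin_pos; lra).
      assert (Hx := Hp a (wb - h) (HTD h ltac:(unfold h; lra))).
      rewrite Rminus_diag, Rabs_R0 in Hx. replace (wb - h - wb) with (- h) in Hx by ring.
      rewrite Rabs_Ropp, Rabs_right in Hx by (unfold h; lra).
      specialize (Hx ltac:(lra) ltac:(unfold h; lra)).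
      destruct (Glt a (wb - h) (Ho h ltac:(unfold h; lra)) Hau ltac:(unfold h; lra)). lra. }
  assert (Hwb3 : wb < vs).
  { destruct Hwb2 as [H| ->]; auto. exfalso; apply NGvs; auto. }
  set (Fail := fun a b => T a b /\ a <= us /\ (0 < GX a b \/ 0 < GY a b)).
  assert (NearFail : forall h, 0 < h -> exists a b, Fail a b /\ wb < b < wb + h).
  { intros h Hh. set (w := wb + Rmin h (vs - wb) / 2).
    assert (Rmin h (vs - wb) <= h) by apply Rmin_l.
    assert (0 < Rmin h (vs - wb)) by (apply Rmin_pos; lra).
    assert (NGw : ~ Good w).
    { intro Hw. assert (w <= wb) by (apply (proj1 Hwb); auto). unfold w in *; lra. }
    apply NNPP; intro Hn. apply NGw. intros a b HT Hau Hb.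
    apply NNPP; intro Hn2. apply Hn. exists a, b. split. split; auto. split; auto.
    apply not_and_or in Hn2. destruct Hn2 as [Hn2|Hn2]; apply Rnot_le_lt in Hn2; auto.
    split. apply NNPP; intro Hn3. apply Hn2. apply Rnot_lt_le in Hn3. apply Gwb; auto.
    unfold w in *; lra. }
  set (Phi := fun a => forall h, 0 < h -> exists a' b', Fail a' b' /\ a <= a' /\ wb < b' < wb + h).
  assert (Phi1 : Phi u1).
  { intros h Hh. destruct (NearFail h Hh) as [a [b [HF Hb]]]. exists a, b. split; auto.
    split; auto. destruct HF as [[HT1 _] _]. lra. }
  assert (Phile : forall a, Phi a -> a <= us).
  { intros a Ha. destruct (Ha 1) as [a' [b' [[_ [Hau _]] [Haa _]]]]; lra. }
  assert (Phidown : forall a a', Phi a -> a' <= a -> Phi a').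
  { intros a a' Ha Ha' h Hh. destruct (Ha h Hh) as [x [y [H1 [H2 H3]]]]. exists x, y. split; auto. split; auto; lra. }
  destruct (completeness Phi) as [al Hal].
  { exists us. intros a Ha. auto. }
  { exists u1. auto. }
  assert (Hal1 : u1 <= al) by (apply (proj1 Hal); auto).
  assert (Hal2 : al <= us) by (apply (proj2 Hal); intros a Ha; auto).
  assert (Accum : forall h, 0 < h -> exists a' b', Fail a' b' /\ Rabs (a' - al) < h /\ wb < b' < wb + h).
  { intros h Hh.
    destruct (lub_exists_above Phi al (al - h/2) Hal ltac:(lra)) as [a0 [Ha0 Ha0']].
    assert (P1 : Phi (al - h/2)) by (apply (Phidown a0); auto; lra).
    assert (P2 : ~ Phi (al + h/2)).
    { intro Hp. assert (al + h/2 <= al) by (apply (proj1 Hal); auto). lra. }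
    apply not_all_ex_not in P2. destruct P2 as [h0 Hh0].
    apply imply_to_and in Hh0. destruct Hh0 as [Hh0 Hn0].
    assert (0 < Rmin h h0) by (apply Rmin_pos; lra).
    assert (Rmin h h0 <= h) by apply Rmin_l. assert (Rmin h h0 <= h0) by apply Rmin_r.
    destruct (P1 (Rmin h h0)) as [a' [b' [HF [Ha' Hb']]]]; auto.
    exists a', b'. split; auto. split; [|lra].
    assert (a' < al + h/2).
    { destruct (Rlt_le_dec a' (al + h/2)); auto. exfalso. apply Hn0. exists a', b'.
      split; auto. split; auto. lra. }
    apply Rabs_def1; lra. }
  assert (Husv : us < U) by lra.
  assert (Hgal := Hgc al ltac:(lra)).
  destruct (Rtotal_order (gam al) wb) as [Hlt|[Heq|Hgt]].
  -
    assert (Hal3 : u1 < al).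
    { destruct Hal1 as [H| <-]; auto. rewrite Hg1 in Hlt. lra. }
    assert (HTp : T al wb).
    { split. lra. split. lra. apply (Hpc us vs (conj Hs1 (conj Hs2 Hs3))); lra. }
    destruct (Gwb al wb HTp Hal2 ltac:(lra)) as [GX0 GY0].
    destruct (Hcont al wb HTp) as [CX CY].
    assert (Hzero : GX al wb = 0 \/ GY al wb = 0).
    { destruct GX0 as [GX0| ->]; [|auto]. destruct GY0 as [GY0| ->]; [|auto].
      exfalso.
      destruct (cat_neg D GX al wb CX GX0) as [d1 [Hd1 H1]].
      destruct (cat_neg D GY al wb CY GY0) as [d2 [Hd2 H2]].
      assert (0 < Rmin d1 d2) by (apply Rmin_pos; lra).
      assert (Rmin d1 d2 <= d1) by apply Rmin_l. assert (Rmin d1 d2 <= d2) by apply Rmin_r.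
      destruct (Accum (Rmin d1 d2)) as [a' [b' [[[Ha1 [Ha2 Ha3]] [_ Hf]] [Ha Hb]]]]; auto.
      assert (Rabs (b' - wb) < Rmin d1 d2) by (apply Rabs_def1; lra).
      assert (GX a' b' < 0) by (apply H1; auto; lra).
      assert (GY a' b' < 0) by (apply H2; auto; lra).
      lra. }
    destruct Hzero as [HZ|HZ].
    + destruct (HlocX al wb HTp HZ GY0) as [d1 [Hd1 H1]].
      destruct (T_open_down D u1 U V gam al wb HTp Hpc) as [d2 [Hd2 Ho]].
      set (h := Rmin d1 d2 / 2).
      assert (Rmin d1 d2 <= d1) by apply Rmin_l. assert (Rmin d1 d2 <= d2) by apply Rmin_r.
      assert (0 < Rmin d1 d2) by (apply Rmin_pos; lra).
      assert (HT' := Ho h ltac:(unfold h; lra)).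
      assert (Hp := H1 h ltac:(unfold h; lra) HT').
      destruct (Gwb al (wb - h) HT' Hal2 ltac:(unfold h; lra)). lra.
    + destruct (HlocY al wb HTp HZ GX0) as [d1 [Hd1 H1]].
      destruct (T_open_left D u1 U V gam al wb HTp Hgc Hpc) as [d2 [Hd2 Ho]].
      set (h := Rmin d1 d2 / 2).
      assert (Rmin d1 d2 <= d1) by apply Rmin_l. assert (Rmin d1 d2 <= d2) by apply Rmin_r.
      assert (0 < Rmin d1 d2) by (apply Rmin_pos; lra).
      assert (HT' := Ho h ltac:(unfold h; lra)).
      assert (Hp := H1 h ltac:(unfold h; lra) HT').
      destruct (Gwb (al - h) wb HT' ltac:(unfold h; lra) ltac:(lra)). lra.
  -
    assert (Hal3 : u1 < al).
    { destruct Hal1 as [H| <-]; auto. rewrite Hg1 in Heq. lra. }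
    destruct (Hcurve al ltac:(lra)) as [HDc [GXc [GYc [CX CY]]]].
    destruct (cat_neg D GX al (gam al) CX GXc) as [d1 [Hd1 H1]].
    destruct (cat_neg D GY al (gam al) CY GYc) as [d2 [Hd2 H2]].
    assert (0 < Rmin d1 d2) by (apply Rmin_pos; lra).
    assert (Rmin d1 d2 <= d1) by apply Rmin_l. assert (Rmin d1 d2 <= d2) by apply Rmin_r.
    destruct (Accum (Rmin d1 d2)) as [a' [b' [[[Ha1 [Ha2 Ha3]] [_ Hf]] [Ha Hb]]]]; auto.
    assert (Rabs (b' - gam al) < Rmin d1 d2) by (apply Rabs_def1; lra).
    assert (GX a' b' < 0) by (apply H1; auto; lra).
    assert (GY a' b' < 0) by (apply H2; auto; lra).
    lra.
  - destruct (cont_pt_eps gam al Hgal ((gam al - wb)/2)) as [d [Hd Hc]]; [lra|].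
    assert (0 < Rmin d ((gam al - wb)/2)) by (apply Rmin_pos; lra).
    assert (Rmin d ((gam al - wb)/2) <= d) by apply Rmin_l.
    assert (Rmin d ((gam al - wb)/2) <= (gam al - wb)/2) by apply Rmin_r.
    destruct (Accum (Rmin d ((gam al - wb)/2))) as [a' [b' [[[Ha1 [Ha2 Ha3]] _] [Ha Hb]]]]; auto.
    assert (Hc' := Hc a' ltac:(lra)). apply Rabs_def2 in Hc'. lra.
Qed.


Lemma dpl_mult f g x a b : derivable_pt_lim f x a -> derivable_pt_lim g x b ->
  derivable_pt_lim (fun y => f y * g y) x (a * g x + f x * b).
Proof. intros. exact (derivable_pt_lim_mult f g x a b H H0). Qed.
Lemma dpl_plus f g x a b : derivable_pt_lim f x a -> derivable_pt_lim g x b ->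
  derivable_pt_lim (fun y => f y + g y) x (a + b).
Proof. intros. exact (derivable_pt_lim_plus f g x a b H H0). Qed.
Lemma dpl_minus f g x a b : derivable_pt_lim f x a -> derivable_pt_lim g x b ->
  derivable_pt_lim (fun y => f y - g y) x (a - b).
Proof. intros. exact (derivable_pt_lim_minus f g x a b H H0). Qed.
Lemma dpl_opp f x a : derivable_pt_lim f x a -> derivable_pt_lim (fun y => - f y) x (- a).
Proof. intros. exact (derivable_pt_lim_opp f x a H). Qed.
Lemma dpl_const c x : derivable_pt_lim (fun _ => c) x 0.
Proof. exact (derivable_pt_lim_const c x). Qed.
Lemma dpl_scal c f x a : derivable_pt_lim f x a -> derivable_pt_lim (fun y => c * f y) x (c * a).
Proof. intros. exact (derivable_pt_lim_scal f c x a H). Qed.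
Lemma dpl_eq f x a b : derivable_pt_lim f x a -> a = b -> derivable_pt_lim f x b.
Proof. intros H ->. auto. Qed.

Lemma abs_le x a : Rabs x <= a -> - a <= x <= a.
Proof. intros H. split. assert (- x <= Rabs x) by (rewrite <- Rabs_Ropp; apply Rle_abs). lra.
  assert (x <= Rabs x) by apply Rle_abs. lra. Qed.


Theorem mainTheorem13 :
  forall M : R, 0 < M ->
  exists C : R, 0 < C /\
  forall delta : R, 0 < delta ->
  exists eps0 : R, 0 < eps0 /\
  exists l0 : nat,
  forall eps : R, 0 < eps <= eps0 ->
  forall (u1 U V : R) (gam : R -> R) (D : R -> R -> Prop)
         (r Om phi ru rv phiu phiv : R -> R -> R),
    u1 < U ->
    (* the initial curve v = gam u is spacelike (strictly decreasing),
       continuous, and meets {v = V} at u = u1 *)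
    (forall a b, u1 <= a -> a < b -> b <= U -> gam b < gam a) ->
    (forall a, u1 <= a <= U -> continuity_pt gam a) ->
    gam u1 = V ->
    (* the solution lives on the open set D, containing the initial curve *)
    open2 D ->
    (forall a, u1 < a < U -> D a (gam a)) ->
    ESF_solution D r Om phi ru rv phiu phiv ->
    (* T0 is the domain of dependence of the initial curve: past-closed *)
    (forall u v, trapezoid D u1 U V gam u v ->
       forall u' v', u1 < u' <= u -> gam u' < v' <= v -> D u' v') ->
    (* T0 lies in the trapped region *)
    (forall u v, trapezoid D u1 U V gam u v ->
       ru u v < 0 /\ rv u v < 0 /\ 0 < r u v) ->
    (* initial data on the curve {r = 2^-l0} *)
    (forall a, u1 < a < U ->
       let v := gam a in
       r a v = (/ 2) ^ l0 /\
       Rabs (rv a v + M / r a v) <= eps * (M / r a v) /\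
       Rabs (ru a v + M / r a v) <= eps * (M / r a v) /\
       Rabs ((Om a v) ^ 2 - 2 * M / r a v) <= eps * (M / r a v) /\
       Rabs (phiu a v) <= eps / (r a v) ^ 2 /\
       Rabs (phiv a v) <= eps / (r a v) ^ 2) ->
    (* conclusion throughout T0 *)
    forall u v, trapezoid D u1 U V gam u v ->
      Rabs (r u v * rv u v + M) <= delta * M /\
      Rabs (r u v * ru u v + M) <= delta * M /\
      (Om u v) ^ 2 <= 5 / 2 * M / r u v /\
      (r u v) ^ 2 * Rabs (phiu u v) + (r u v) ^ 2 * Rabs (phiv u v) <= C * eps.
Proof.
  intros M HM. exists 5. split; [lra|]. intros delta Hdelta.
  exists (Rmin (delta/2) (1/100)). split. apply Rmin_pos; lra.
  assert (Hy : 0 < Rmin (delta * M / 2) (M / 4)) by (apply Rmin_pos; nra).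
  destruct (pow_lt_1_zero (/2) ltac:(rewrite Rabs_right; lra) _ Hy) as [N HN].
  exists N.
  intros eps Heps u1 U V gam D r Om phi ru rv phiu phiv Hu1U Hdec Hgc Hg1 Hop Hcurve Hsol
    Hpc Htrap Hdata.
  assert (Hr0 : (/2) ^ N < Rmin (delta * M / 2) (M / 4)).
  { specialize (HN N (le_n N)). rewrite Rabs_right in HN. lra. left; apply pow_lt; lra. }
  assert (Hr0pos : 0 < (/2) ^ N) by (apply pow_lt; lra).
  remember ((/2) ^ N) as r0 eqn:Er0.
  assert (Hr0a : r0 < delta * M / 2) by (eapply Rlt_le_trans; [exact Hr0| apply Rmin_l]).
  assert (Hr0b : r0 < M / 4) by (eapply Rlt_le_trans; [exact Hr0| apply Rmin_r]).
  clear Hr0 HN Hy.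
  assert (He1 : eps <= delta / 2) by (destruct Heps as [_ Hx]; eapply Rle_trans; [exact Hx| apply Rmin_l]).
  assert (He2 : eps <= 1/100) by (destruct Heps as [_ Hx]; eapply Rle_trans; [exact Hx| apply Rmin_r]).
  assert (He0 : 0 < eps) by (destruct Heps; lra). clear Heps.
  remember ((1 - eps) / (2 + eps)) as ka eqn:Eka.
  assert (Hka : 49/100 <= ka).
  { rewrite Eka. apply Rmult_le_reg_r with (2 + eps). lra.
    replace ((1 - eps) / (2 + eps) * (2 + eps)) with (1 - eps) by (field; lra). lra. }
  assert (Hka2 : ka * (2 + eps) = 1 - eps) by (rewrite Eka; field; lra).
  clear Eka.
  assert (Hk4 : / (4 * ka) <= 52/100).
  { apply Rmult_le_reg_r with (4 * ka). lra. rewrite Rinv_l by lra. lra. }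
  assert (Hk4p : 0 < / (4 * ka)) by (apply Rinv_0_lt_compat; lra).
  destruct Hsol as [HOm [Hru [Hrv [Hpu [Hpv Hsol]]]]].
  destruct Hsol as [ruv [Lu [Luv [phiuv Hsol]]]].
  destruct Hsol as [Hruv [HLu [HLuv [Hphiuv [RayU [RayV [Heqs Hsol]]]]]]].
  destruct Hsol as [Cr [COm [Cphi [Cru [Crv [Cpu [Cpv [Cruv [CLuv Cphiuv]]]]]]]]].
  assert (Hrvu : pd_u D rv ruv) by exact (schwarz D r ru rv ruv Hop Hru Hrv Hruv Cruv).
  assert (Hpvu : pd_u D phiv phiuv) by exact (schwarz D phi phiu phiv phiuv Hop Hpu Hpv Hphiuv Cphiuv).
  remember (M / r0) as q eqn:Eq.
  assert (Hq : 0 < q) by (rewrite Eq; apply Rdiv_lt_0_compat; lra).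
  assert (Hcv : forall a, u1 < a < U ->
    r a (gam a) = r0 /\
    - (1 + eps) * q <= rv a (gam a) <= - (1 - eps) * q /\
    - (1 + eps) * q <= ru a (gam a) <= - (1 - eps) * q /\
    (2 - eps) * q <= Om a (gam a) ^ 2 <= (2 + eps) * q /\
    Rabs (phiu a (gam a)) <= eps / r0 ^ 2 /\ Rabs (phiv a (gam a)) <= eps / r0 ^ 2).
  { intros a Ha. destruct (Hdata a Ha) as [E1 [E2 [E3 [E4 [E5 E6]]]]].
    cbv zeta in *. rewrite E1 in *. rewrite <- Eq in E2, E3, E4.
    replace (2 * M / r0) with (2 * q) in E4 by (rewrite Eq; field; lra).
    apply abs_le in E2. apply abs_le in E3. apply abs_le in E4.
    repeat split; try lra; auto. }
  set (T := trapezoid D u1 U V gam) in *.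
  assert (HTD : forall a b, T a b -> D a b) by (intros a b [_ [_ H]]; auto).
  assert (Hhor : forall a b, T a b -> exists a0, u1 < a0 < a /\ gam a0 = b /\
     (forall c, a0 <= c <= a -> D c b) /\ (forall c, a0 < c <= a -> T c b)).
  { intros a b HT. destruct HT as [Ha1 [Ha2 Ha3]] eqn:EHT.
    destruct (IVT_interv (fun x => b - gam x) u1 a) as [z [Hz Ez]].
    { intros c Hc. apply continuity_pt_minus. apply continuity_pt_const. intros x y; auto.
      apply Hgc. lra. }
    lra. rewrite Hg1. lra. lra.
    assert (Hz1 : z <> u1) by (intro; subst; lra).
    assert (Hz2 : z <> a) by (intro; subst; lra).
    exists z. split. lra. split. lra.
    assert (HT2 : forall c, z < c <= a -> T c b).
    { intros c Hc. assert (gam c < gam z) by (apply Hdec; lra).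
      split. lra. split. lra. apply (Hpc a b HT); lra. }
    split; auto. intros c Hc. destruct (Req_dec c z) as [->|Hne].
    - replace b with (gam z) by lra. apply Hcurve. lra.
    - apply HTD, HT2; lra. }
  assert (Hver : forall a b, T a b -> (forall y, gam a <= y <= b -> D a y) /\
     (forall y, gam a < y <= b -> T a y)).
  { intros a b HT. destruct HT as [Ha1 [Ha2 Ha3]] eqn:EHT.
    assert (HT2 : forall y, gam a < y <= b -> T a y).
    { intros y Hy. split. lra. split. lra. apply (Hpc a b HT); lra. }
    split; auto. intros y Hy. destruct (Req_dec y (gam a)) as [->|Hne].
    - apply Hcurve. lra.
    - apply HTD, HT2; lra. }
  assert (HOmU : forall a b, T a b -> ka * Om a b ^ 2 <= - ru a b).
  { intros a b HT. destruct (Hhor a b HT) as [a0 [Ha0 [Eb [HDs HTs]]]].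
    assert (Hmono := mono_nonincr (fun x => ru x b / Om x b ^ 2)
       (fun x => - r x b / Om x b ^ 2 * phiu x b ^ 2) a0 a ltac:(lra)
       (fun c Hc => RayU c b (HDs c Hc))).
    assert (Hm : ru a b / Om a b ^ 2 <= ru a0 b / Om a0 b ^ 2).
    { apply Hmono. intros c Hc. cbv beta. destruct (Htrap c b (HTs c ltac:(lra))) as [_ [_ Hr]].
        assert (0 < Om c b ^ 2) by (apply pow_lt; apply HOm; apply HDs; lra).
        assert (0 <= phiu c b ^ 2) by (apply pow2_ge_0).
        assert (0 < r c b / Om c b ^ 2) by (apply Rdiv_lt_0_compat; lra).
        replace (- r c b / Om c b ^ 2 * phiu c b ^ 2) with (- (r c b / Om c b ^ 2 * phiu c b ^ 2)) by (unfold Rdiv; ring).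
        nra. }
    assert (HaU : u1 < a < U) by (destruct HT as [HaU _]; lra).
    subst b. destruct (Hcv a0 ltac:(lra)) as [_ [_ [Hru0 [HOm0 _]]]].
    assert (HO0 : 0 < Om a0 (gam a0) ^ 2) by (apply pow_lt; apply HOm; apply HDs; lra).
    assert (HOa : 0 < Om a (gam a0) ^ 2) by (apply pow_lt; apply HOm; apply HDs; lra).
    assert (ru a0 (gam a0) / Om a0 (gam a0) ^ 2 <= - ka).
    { apply Rmult_le_reg_r with (Om a0 (gam a0) ^ 2). auto.
      replace (ru a0 (gam a0) / Om a0 (gam a0) ^ 2 * Om a0 (gam a0) ^ 2) with (ru a0 (gam a0)) by (field; apply Rgt_not_eq; apply HOm; apply HDs; lra).
      nra. }
    assert (Hf : ru a (gam a0) / Om a (gam a0) ^ 2 <= - ka) by lra.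
    apply Rmult_le_compat_r with (r := Om a (gam a0) ^ 2) in Hf; [|lra].
    replace (ru a (gam a0) / Om a (gam a0) ^ 2 * Om a (gam a0) ^ 2) with (ru a (gam a0)) in Hf by (field; apply Rgt_not_eq; apply HOm; apply HDs; lra).
    lra. }
  assert (HOmV : forall a b, T a b -> ka * Om a b ^ 2 <= - rv a b).
  { intros a b HT. destruct (Hver a b HT) as [HDs HTs].
    assert (Hb : gam a < b) by (destruct HT as [_ [Hb _]]; lra).
    assert (Ha : u1 < a < U) by (destruct HT as [Ha _]; lra).
    assert (Hmono := mono_nonincr (fun y => rv a y / Om a y ^ 2)
       (fun y => - r a y / Om a y ^ 2 * phiv a y ^ 2) (gam a) b ltac:(lra)
       (fun c Hc => RayV a c (HDs c Hc))).
    assert (Hm : rv a b / Om a b ^ 2 <= rv a (gam a) / Om a (gam a) ^ 2).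
    { apply Hmono. intros c Hc. cbv beta. destruct (Htrap a c (HTs c ltac:(lra))) as [_ [_ Hr]].
        assert (0 < Om a c ^ 2) by (apply pow_lt; apply HOm; apply HDs; lra).
        assert (0 <= phiv a c ^ 2) by (apply pow2_ge_0).
        assert (0 < r a c / Om a c ^ 2) by (apply Rdiv_lt_0_compat; lra).
        replace (- r a c / Om a c ^ 2 * phiv a c ^ 2) with (- (r a c / Om a c ^ 2 * phiv a c ^ 2)) by (unfold Rdiv; ring).
        nra. }
    destruct (Hcv a Ha) as [_ [Hrv0 [_ [HOm0 _]]]].
    assert (HO0 : 0 < Om a (gam a) ^ 2) by (apply pow_lt; apply HOm; apply HDs; lra).
    assert (HOa : 0 < Om a b ^ 2) by (apply pow_lt; apply HOm; apply HDs; lra).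
    assert (rv a (gam a) / Om a (gam a) ^ 2 <= - ka).
    { apply Rmult_le_reg_r with (Om a (gam a) ^ 2). auto.
      replace (rv a (gam a) / Om a (gam a) ^ 2 * Om a (gam a) ^ 2) with (rv a (gam a)) by (field; apply Rgt_not_eq; apply HOm; apply HDs; lra).
      nra. }
    assert (Hf : rv a b / Om a b ^ 2 <= - ka) by lra.
    apply Rmult_le_compat_r with (r := Om a b ^ 2) in Hf; [|lra].
    replace (rv a b / Om a b ^ 2 * Om a b ^ 2) with (rv a b) in Hf by (field; apply Rgt_not_eq; apply HOm; apply HDs; lra).
    lra. }
  remember (/ (4 * ka)) as t eqn:Et.
  assert (Ht1 : t * (4 * ka) = 1) by (rewrite Et; field; lra).
  assert (HrM : r0 * q = M) by (rewrite Eq; field; lra).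
  assert (HA : forall a b, T a b -> (1 - eps) * M <= - (r a b * rv a b) <= (1 + eps) * M + r0 * t).
  { intros a b HT. destruct (Hhor a b HT) as [a0 [Ha0 [Eb [HDs HTs]]]].
    assert (HaU : u1 < a < U) by (destruct HT as [HaU _]; lra).
    destruct (Htrap a b HT) as [_ [_ Hra]].
    assert (Hup := mono_nonincr (fun x => - (r x b * rv x b) + r x b * t)
       (fun x => - (ru x b * rv x b + r x b * ruv x b) + ru x b * t) a0 a ltac:(lra)).
    assert (Hlo := mono_nonincr (fun x => r x b * rv x b)
       (fun x => ru x b * rv x b + r x b * ruv x b) a0 a ltac:(lra)).
    cbv beta in Hup, Hlo.
    assert (U1 : - (r a b * rv a b) + r a b * t <= - (r a0 b * rv a0 b) + r a0 b * t).
    { apply Hup.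
      - intros c Hc. eapply dpl_eq.
        + apply dpl_plus. apply dpl_opp. apply dpl_mult. apply Hru, HDs, Hc. apply Hrvu, HDs, Hc.
          apply dpl_mult. apply Hru, HDs, Hc. apply dpl_const.
        + cbv beta. ring.
      - intros c Hc. assert (HTc := HTs c ltac:(lra)). assert (HDc := HTD c b HTc).
        destruct (Heqs c b HDc) as [E1 _].
        assert (HO := HOmU c b HTc).
        assert (E2 : - (ru c b * rv c b + r c b * ruv c b) = Om c b ^ 2 / 4) by lra.
        rewrite E2.
        assert (E3 : ru c b * t <= - (ka * Om c b ^ 2) * t) by (apply Rmult_le_compat_r; lra).
        assert (E4 : ka * Om c b ^ 2 * t = Om c b ^ 2 / 4).
        { replace (ka * Om c b ^ 2 * t) with (Om c b ^ 2 / 4 * (t * (4 * ka))) by field.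
          rewrite Ht1. ring. }
        lra. }
    assert (L1 : r a b * rv a b <= r a0 b * rv a0 b).
    { apply Hlo.
      - intros c Hc. eapply dpl_eq. apply dpl_mult. apply Hru, HDs, Hc. apply Hrvu, HDs, Hc. cbv beta; ring.
      - intros c Hc. assert (HTc := HTs c ltac:(lra)). assert (HDc := HTD c b HTc).
        destruct (Heqs c b HDc) as [E1 _].
        assert (0 <= Om c b ^ 2) by apply pow2_ge_0. lra. }
    subst b. destruct (Hcv a0 ltac:(lra)) as [Er [Hrv0 _]]. rewrite Er in U1, L1.
    assert (0 < r a (gam a0) * t) by (apply Rmult_lt_0_compat; lra).
    split; nra. }
  assert (HB : forall a b, T a b -> (1 - eps) * M <= - (r a b * ru a b) <= (1 + eps) * M + r0 * t).
  { intros a b HT. destruct (Hver a b HT) as [HDs HTs].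
    assert (Hb : gam a < b) by (destruct HT as [_ [Hb _]]; lra).
    assert (HaU : u1 < a < U) by (destruct HT as [HaU _]; lra).
    destruct (Htrap a b HT) as [_ [_ Hra]].
    assert (Hup := mono_nonincr (fun y => - (r a y * ru a y) + r a y * t)
       (fun y => - (rv a y * ru a y + r a y * ruv a y) + rv a y * t) (gam a) b ltac:(lra)).
    assert (Hlo := mono_nonincr (fun y => r a y * ru a y)
       (fun y => rv a y * ru a y + r a y * ruv a y) (gam a) b ltac:(lra)).
    cbv beta in Hup, Hlo.
    assert (U1 : - (r a b * ru a b) + r a b * t <= - (r a (gam a) * ru a (gam a)) + r a (gam a) * t).
    { apply Hup.
      - intros c Hc. eapply dpl_eq.
        + apply dpl_plus. apply dpl_opp. apply dpl_mult. apply Hrv, HDs, Hc. apply Hruv, HDs, Hc.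
          apply dpl_mult. apply Hrv, HDs, Hc. apply dpl_const.
        + cbv beta. ring.
      - intros c Hc. assert (HTc := HTs c ltac:(lra)). assert (HDc := HTD a c HTc).
        destruct (Heqs a c HDc) as [E1 _].
        assert (HO := HOmV a c HTc).
        assert (E2 : - (rv a c * ru a c + r a c * ruv a c) = Om a c ^ 2 / 4) by lra.
        rewrite E2.
        assert (E3 : rv a c * t <= - (ka * Om a c ^ 2) * t) by (apply Rmult_le_compat_r; lra).
        assert (E4 : ka * Om a c ^ 2 * t = Om a c ^ 2 / 4).
        { replace (ka * Om a c ^ 2 * t) with (Om a c ^ 2 / 4 * (t * (4 * ka))) by field.
          rewrite Ht1. ring. }
        lra. }
    assert (L1 : r a b * ru a b <= r a (gam a) * ru a (gam a)).
    { apply Hlo.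
      - intros c Hc. eapply dpl_eq. apply dpl_mult. apply Hrv, HDs, Hc. apply Hruv, HDs, Hc. cbv beta; ring.
      - intros c Hc. assert (HTc := HTs c ltac:(lra)). assert (HDc := HTD a c HTc).
        destruct (Heqs a c HDc) as [E1 _].
        assert (0 <= Om a c ^ 2) by apply pow2_ge_0. lra. }
    destruct (Hcv a HaU) as [Er [_ [Hru0 _]]]. rewrite Er in U1, L1.
    assert (0 < r a b * t) by (apply Rmult_lt_0_compat; lra).
    split; nra. }
  remember (2 * eps / M) as L eqn:EL.
  assert (HLp : 0 < L) by (rewrite EL; apply Rdiv_lt_0_compat; lra).
  assert (HLM : L * M = 2 * eps) by (rewrite EL; field; lra).
  assert (CG : forall a b, D a b ->
     cat D (fun a b => Rabs (r a b * phiu a b) + L * ru a b) a b /\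
     cat D (fun a b => Rabs (r a b * phiv a b) + L * rv a b) a b).
  { intros a b HD. split.
    - apply (cat_plus D (fun a b => Rabs (r a b * phiu a b)) (fun a b => L * ru a b)).
      apply (cat_abs D (fun a b => r a b * phiu a b)). apply (cat_mult D r phiu); apply cat_of; auto.
      apply (cat_mult D (fun _ _ => L) ru). apply cat_const. apply cat_of; auto.
    - apply (cat_plus D (fun a b => Rabs (r a b * phiv a b)) (fun a b => L * rv a b)).
      apply (cat_abs D (fun a b => r a b * phiv a b)). apply (cat_mult D r phiv); apply cat_of; auto.
      apply (cat_mult D (fun _ _ => L) rv). apply cat_const. apply cat_of; auto. }
  assert (HMP : forall a b, T a b ->
     Rabs (r a b * phiu a b) + L * ru a b <= 0 /\ Rabs (r a b * phiv a b) + L * rv a b <= 0).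
  { intros us vs HT.
    apply (MP D u1 U V gam (fun a b => Rabs (r a b * phiu a b) + L * ru a b)
              (fun a b => Rabs (r a b * phiv a b) + L * rv a b) Hdec Hgc Hg1 Hpc); auto.
    - intros a0 Ha0. assert (HD0 := Hcurve a0 Ha0). destruct (CG a0 (gam a0) HD0) as [C1 C2].
      destruct (Hcv a0 Ha0) as [Er [Hrv0 [Hru0 [_ [Hpu0 Hpv0]]]]].
      rewrite Er. split; auto. split; [|split; [|split; auto]].
      + rewrite Rabs_mult, (Rabs_right r0) by lra.
        assert (W1 : r0 * (eps / r0 ^ 2) = eps / r0) by (field; lra).
        assert (W2 : L * q = 2 * (eps / r0)) by (rewrite Eq, EL; field; lra).
        assert (W3 : 0 < eps / r0) by (apply Rdiv_lt_0_compat; lra).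
        assert (r0 * Rabs (phiu a0 (gam a0)) <= r0 * (eps / r0 ^ 2)) by (apply Rmult_le_compat_l; lra).
        assert (L * ru a0 (gam a0) <= L * (- (1 - eps) * q)) by (apply Rmult_le_compat_l; lra).
        nra.
      + rewrite Rabs_mult, (Rabs_right r0) by lra.
        assert (W1 : r0 * (eps / r0 ^ 2) = eps / r0) by (field; lra).
        assert (W2 : L * q = 2 * (eps / r0)) by (rewrite Eq, EL; field; lra).
        assert (W3 : 0 < eps / r0) by (apply Rdiv_lt_0_compat; lra).
        assert (r0 * Rabs (phiv a0 (gam a0)) <= r0 * (eps / r0 ^ 2)) by (apply Rmult_le_compat_l; lra).
        assert (L * rv a0 (gam a0) <= L * (- (1 - eps) * q)) by (apply Rmult_le_compat_l; lra).
        nra.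
    - intros a b HT0 HX HY. cbv beta in *. assert (HD := HTD a b HT0).
      destruct (Htrap a b HT0) as [Hru1 [Hrv1 Hr1]].
      assert (HO2 : 0 < Om a b ^ 2) by (apply pow_lt; apply HOm; auto).
      destruct (Heqs a b HD) as [E1 [_ E3]].
      assert (HY2 : Rabs (r a b * phiv a b) <= - L * rv a b) by lra.
      apply abs_le in HY2.
      destruct (Rcase_abs (r a b * phiu a b)) as [Hneg|Hpos].
      + rewrite Rabs_left in HX by auto.
        set (K := rv a b * phiu a b + r a b * phiuv a b - L * ruv a b).
        assert (Hd : derivable_pt_lim (fun y => r a y * phiu a y - L * ru a y) b K).
        { unfold K. eapply dpl_eq. apply dpl_minus. apply dpl_mult. apply Hrv, HD. apply Hphiuv, HD.
          apply dpl_scal. apply Hruv, HD. cbv beta; ring. }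
        assert (Ek : r a b * K = - ru a b * (r a b * phiv a b) + L * ru a b * rv a b + L * Om a b ^ 2 / 4).
        { unfold K. replace (r a b * (rv a b * phiu a b + r a b * phiuv a b - L * ruv a b))
            with (r a b * rv a b * phiu a b + r a b * (r a b * phiuv a b) - L * (r a b * ruv a b)) by ring.
          rewrite E1, E3. field. }
        assert (Hk1 : - ru a b * (r a b * phiv a b) >= - ru a b * (L * rv a b)) by (apply Rle_ge, Rmult_le_compat_l; lra).
        assert (HK : 0 < K).
        { apply Rnot_le_lt. intro HK. assert (r a b * K <= 0) by nra.
          assert (0 < L * Om a b ^ 2) by (apply Rmult_lt_0_compat; lra). nra. }
        destruct (deriv_back_pos _ b K Hd HK) as [d [Hd0 Hd1]].
        exists d. split; auto. intros h Hh _. specialize (Hd1 h Hh). cbv beta in Hd1.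
        assert (- (r a (b - h) * phiu a (b - h)) <= Rabs (r a (b - h) * phiu a (b - h))) by (rewrite <- Rabs_Ropp; apply Rle_abs).
        lra.
      + rewrite Rabs_right in HX by auto.
        set (K := rv a b * phiu a b + r a b * phiuv a b + L * ruv a b).
        assert (Hd : derivable_pt_lim (fun y => r a y * phiu a y + L * ru a y) b K).
        { unfold K. eapply dpl_eq. apply dpl_plus. apply dpl_mult. apply Hrv, HD. apply Hphiuv, HD.
          apply dpl_scal. apply Hruv, HD. cbv beta; ring. }
        assert (Ek : r a b * K = - ru a b * (r a b * phiv a b) - L * ru a b * rv a b - L * Om a b ^ 2 / 4).
        { unfold K. replace (r a b * (rv a b * phiu a b + r a b * phiuv a b + L * ruv a b))
            with (r a b * rv a b * phiu a b + r a b * (r a b * phiuv a b) + L * (r a b * ruv a b)) by ring.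
          rewrite E1, E3. field. }
        assert (Hk1 : - ru a b * (r a b * phiv a b) <= - ru a b * (- L * rv a b)) by (apply Rmult_le_compat_l; lra).
        assert (HK : K < 0).
        { apply Rnot_le_lt. intro HK. assert (0 <= r a b * K) by (apply Rmult_le_pos; lra).
          assert (0 < L * Om a b ^ 2) by (apply Rmult_lt_0_compat; lra). nra. }
        destruct (deriv_back_neg _ b K Hd HK) as [d [Hd0 Hd1]].
        exists d. split; auto. intros h Hh _. specialize (Hd1 h Hh). cbv beta in Hd1.
        assert (r a (b - h) * phiu a (b - h) <= Rabs (r a (b - h) * phiu a (b - h))) by apply Rle_abs.
        lra.
    - intros a b HT0 HY HX. cbv beta in *. assert (HD := HTD a b HT0).
      destruct (Htrap a b HT0) as [Hru1 [Hrv1 Hr1]].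
      assert (HO2 : 0 < Om a b ^ 2) by (apply pow_lt; apply HOm; auto).
      destruct (Heqs a b HD) as [E1 [_ E3]].
      assert (HX2 : Rabs (r a b * phiu a b) <= - L * ru a b) by lra.
      apply abs_le in HX2.
      destruct (Rcase_abs (r a b * phiv a b)) as [Hneg|Hpos].
      + rewrite Rabs_left in HY by auto.
        set (K := ru a b * phiv a b + r a b * phiuv a b - L * ruv a b).
        assert (Hd : derivable_pt_lim (fun x => r x b * phiv x b - L * rv x b) a K).
        { unfold K. eapply dpl_eq. apply dpl_minus. apply dpl_mult. apply Hru, HD. apply Hpvu, HD.
          apply dpl_scal. apply Hrvu, HD. cbv beta; ring. }
        assert (Ek : r a b * K = - rv a b * (r a b * phiu a b) + L * rv a b * ru a b + L * Om a b ^ 2 / 4).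
        { unfold K. replace (r a b * (ru a b * phiv a b + r a b * phiuv a b - L * ruv a b))
            with (r a b * ru a b * phiv a b + r a b * (r a b * phiuv a b) - L * (r a b * ruv a b)) by ring.
          rewrite E1, E3. field. }
        assert (Hk1 : - rv a b * (r a b * phiu a b) >= - rv a b * (L * ru a b)) by (apply Rle_ge, Rmult_le_compat_l; lra).
        assert (HK : 0 < K).
        { apply Rnot_le_lt. intro HK. assert (r a b * K <= 0) by nra.
          assert (0 < L * Om a b ^ 2) by (apply Rmult_lt_0_compat; lra). nra. }
        destruct (deriv_back_pos _ a K Hd HK) as [d [Hd0 Hd1]].
        exists d. split; auto. intros h Hh _. specialize (Hd1 h Hh). cbv beta in Hd1.
        assert (- (r (a - h) b * phiv (a - h) b) <= Rabs (r (a - h) b * phiv (a - h) b)) by (rewrite <- Rabs_Ropp; apply Rle_abs).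
        lra.
      + rewrite Rabs_right in HY by auto.
        set (K := ru a b * phiv a b + r a b * phiuv a b + L * ruv a b).
        assert (Hd : derivable_pt_lim (fun x => r x b * phiv x b + L * rv x b) a K).
        { unfold K. eapply dpl_eq. apply dpl_plus. apply dpl_mult. apply Hru, HD. apply Hpvu, HD.
          apply dpl_scal. apply Hrvu, HD. cbv beta; ring. }
        assert (Ek : r a b * K = - rv a b * (r a b * phiu a b) - L * rv a b * ru a b - L * Om a b ^ 2 / 4).
        { unfold K. replace (r a b * (ru a b * phiv a b + r a b * phiuv a b + L * ruv a b))
            with (r a b * ru a b * phiv a b + r a b * (r a b * phiuv a b) + L * (r a b * ruv a b)) by ring.
          rewrite E1, E3. field. }
        assert (Hk1 : - rv a b * (r a b * phiu a b) <= - rv a b * (- L * ru a b)) by (apply Rmult_le_compat_l; lra).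
        assert (HK : K < 0).
        { apply Rnot_le_lt. intro HK. assert (0 <= r a b * K) by (apply Rmult_le_pos; lra).
          assert (0 < L * Om a b ^ 2) by (apply Rmult_lt_0_compat; lra). nra. }
        destruct (deriv_back_neg _ a K Hd HK) as [d [Hd0 Hd1]].
        exists d. split; auto. intros h Hh _. specialize (Hd1 h Hh). cbv beta in Hd1.
        assert (r (a - h) b * phiv (a - h) b <= Rabs (r (a - h) b * phiv (a - h) b)) by apply Rle_abs.
        lra.
  }
  intros u v HTuv.
  destruct (HA u v HTuv) as [A1 A2]. destruct (HB u v HTuv) as [B1 B2].
  destruct (Htrap u v HTuv) as [Hru1 [Hrv1 Hr1]].
  assert (HO := HOmU u v HTuv).
  destruct (HMP u v HTuv) as [P1 P2].
  assert (Hrt : r0 * t <= r0 * (52/100)) by (apply Rmult_le_compat_l; lra).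
  split; [|split; [|split]].
  - apply Rabs_le. nra.
  - apply Rabs_le. nra.
  - apply Rmult_le_reg_r with (r u v). lra.
    replace (5 / 2 * M / r u v * r u v) with (5 / 2 * M) by (field; lra).
    assert (ka * (Om u v ^ 2 * r u v) <= - (r u v * ru u v)) by nra.
    assert (0 <= Om u v ^ 2 * r u v) by (apply Rmult_le_pos; [apply pow2_ge_0|lra]).
    nra.
  - rewrite Rabs_mult, Rabs_right in P1, P2 by lra.
    assert (E1 : r u v ^ 2 * Rabs (phiu u v) = r u v * (r u v * Rabs (phiu u v))) by ring.
    assert (E2 : r u v ^ 2 * Rabs (phiv u v) = r u v * (r u v * Rabs (phiv u v))) by ring.
    rewrite E1, E2.
    assert (r u v * (r u v * Rabs (phiu u v)) <= r u v * (- L * ru u v)) by (apply Rmult_le_compat_l; lra).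
    assert (r u v * (r u v * Rabs (phiv u v)) <= r u v * (- L * rv u v)) by (apply Rmult_le_compat_l; lra).
    assert (r u v * (- L * ru u v) = L * (- (r u v * ru u v))) by ring.
    assert (r u v * (- L * rv u v) = L * (- (r u v * rv u v))) by ring.
    assert (L * (- (r u v * ru u v)) <= L * ((1 + eps) * M + r0 * t)) by (apply Rmult_le_compat_l; lra).
    assert (L * (- (r u v * rv u v)) <= L * ((1 + eps) * M + r0 * t)) by (apply Rmult_le_compat_l; lra).
    assert (L * ((1 + eps) * M + r0 * t) <= L * (114/100 * M)) by (apply Rmult_le_compat_l; nra).
    lra.
Qed.
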